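(* In the setting of the Weighted Graph Sampler below, let $G\in\mathcal{G}$, let $w$ be a vertex sequence returned by the kernel selection procedure from $G$, $z=\{w,w^r\}$, and let $[\Delta_{low},\Delta_{up}]$ be the admissible range of $\Delta$. If $\Delta_{up}-\Delta_{low}\ge 2$, then the probability $\mathbb{V}_{G_{\Delta^*}}(z)$ that kernel selection from $G_{\Delta^*}$ returns $w$ or $w^r$ is the same for all integers $\Delta^*$ with $\Delta_{low}<\Delta^*<\Delta_{up}$. Consequently the conditional law of $\Delta$ is $$\frac{1}{d}\Big(\mathbb{V}_{G_{\Delta_{low}}}(z)\delta_{\Delta_{low}}+\mathbb{V}_{G_{\Delta_{up}}}(z)\delta_{\Delta_{up}}+\alpha_{int}\sum_{\Delta_{low}<\tilde\Delta<\Delta_{up}}\delta_{\tilde\Delta}\Big),$$ where $\alpha_{int}$ is this common value and $d=\mathbb{V}_{G_{\Delta_{low}}}(z)+\mathbb{V}_{G_{\Delta_{up}}}(z)+\alpha_{int}\max(\Delta_{up}-\Delta_{low}-1,0)$.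
   Context: Setting (weighted graphs). $V$ finite; an integer-weighted graph is $G=(V,E,c)$ with $c:V\times V\to\mathbb{N}_0$, $E(G)=\{uv:c(uv)>0\}$; graphs all directed or all undirected. $G_0$ given, $\mathcal{F}$ a given set of possible edges; $\mathcal{G}$ is the set of weighted graphs with the same (in- and out-, if directed) strength sequence as $G_0$ and $c_G(uv)=c_{G_0}(uv)$ for $uv\in\mathcal{F}$. $N_G(u)=\{v: vu\in E(G), vu\notin\mathcal{F}\}$, $M_G(u)=\{v: uv\notin\mathcal{F}\}$. Kernel selection from $G$: $W_{-1}=*$; $W_0\sim$ Uniform$\{v:N_G(v)\neq\emptyset\}$; $n=0$; repeat: (1) if $N_G(W_n)\setminus\{W_{n-1}\}=\emptyset$ return ''identity'', else $W_{n+1}\sim$ Uniform of that set; (2) if $W_0\in M_G(W_{n+1})\setminus\{W_n\}$ return $W_0W_1\cdots W_{n+1}W_0$; else if $M_G(W_{n+1})\setminus\{W_n\}=\emptyset$ return ''identity''; else $W_{n+2}\sim$ Uniform of that set, $n\leftarrow n+2$. For $w=w_0\cdots w_kw_0$, $n_w(uv)$ is the number of occurrences of $uv$ among $w_1w_0,w_3w_2,\dots,w_kw_{k-1}$ minus the number among $w_1w_2,\dots,w_kw_0$. $G_\Delta$ is the graph with weights $c_G(uv)+n_w(uv)\Delta$; the admissible range $[\Delta_{low},\Delta_{up}]$ is the set of integers $\Delta$ with $G_\Delta\in\mathcal{G}$. $\mathbb{V}_{G'}(z)$ is the probability that kernel selection from $G'$ returns $w$ or $w^r$. The Weighted Graph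 Sampler samples $\Delta$ in the admissible range with probability proportional to $\mathbb{V}_{G_\Delta}(z)$. *)

(* Defs.v *)
From HB Require Import structures.
From mathcomp Require Import all_boot all_order all_algebra.
Set Implicit Arguments. Unset Strict Implicit. Unset Printing Implicit Defensive.
Import Order.TTheory GRing.Theory Num.Theory.
Local Open Scope ring_scope.

(* An integer-weighted graph on the finite vertex type V: c : V -> V -> nat.
   [directed] selects directed/undirected mode; in undirected mode weights are
   symmetric and an ordered pair (u,v) stands for the unordered edge uv. *)
Section WGS.
Variable V : finType.
Variable directed : bool.
Variable G0 : V -> V -> nat.
Variable F : rel V.

Definition ind (b : bool) : rat := if b then 1 else 0.

Definition outstr (G : V -> V -> nat) (u : V) : nat := (\sum_(v : V) G u v)%N.
Definition instr (G : V -> V -> nat) (u : V) : nat := (\sum_(v : V) G v u)%N.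

Definition inG (G : V -> V -> nat) : bool :=
  [&& [forall u, outstr G u == outstr G0 u],
      [forall u, instr G u == instr G0 u],
      [forall u, forall v, F u v ==> (G u v == G0 u v)] &
      (directed || [forall u, forall v, G u v == G v u])].

Definition Nb (G : V -> V -> nat) (u : V) : {set V} :=
  [set v | (0 < G v u)%N && ~~ F v u].
Definition Mb (u : V) : {set V} := [set v | ~~ F u v].
Definition starts (G : V -> V -> nat) : {set V} := [set v | Nb G v != set0].

Definition optexcl (A : {set V}) (o : option V) : {set V} :=
  if o is Some x then A :\ x else A.

(* Probability that kernel selection, being at W_n = cur with W_{n-1} = prev
   (n even), continues exactly along [rest] = W_{n+1} ... W_k and then
   returns W_0 ... W_k W_0, where W_0 = w0. *)
Fixpoint kstep (G : V -> V -> nat) (w0 : V) (prev : option V) (cur : V)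
    (rest : seq V) : rat :=
  match rest with
  | [::] => 0
  | x :: rest' =>
      let A := optexcl (Nb G cur) prev in
      ind (x \in A) / #|A|%:R *
      (let B := Mb x :\ cur in
       match rest' with
       | [::] => ind (w0 \in B)
       | y :: rest'' =>
           ind (w0 \notin B) * (ind (y \in B) / #|B|%:R) *
           kstep G w0 (Some x) y rest''
       end)
  end.

(* Probability that kernel selection from G returns the closed sequence
   w_0 w_1 ... w_k w_0, represented by w = [:: w_0; ...; w_k]. *)
Definition kprob (G : V -> V -> nat) (w : seq V) : rat :=
  match w with
  | [::] => 0
  | w0 :: rest => ind (w0 \in starts G) / #|starts G|%:R * kstep G w0 None w0 rest
  end.

Definition wrev (w : seq V) : seq V :=
  match w with [::] => [::] | w0 :: r => w0 :: rev r end.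

Definition Vz (G : V -> V -> nat) (w : seq V) : rat :=
  kprob G w + (if wrev w != w then kprob G (wrev w) else 0).

Definition edge_is (a b u v : V) : bool :=
  if directed then (a == u) && (b == v)
  else ((a == u) && (b == v)) || ((a == v) && (b == u)).

(* n_w(uv): occurrences among w_1w_0, w_3w_2, ..., w_kw_{k-1} minus
   occurrences among w_1w_2, w_3w_4, ..., w_kw_0 *)
Definition nw (w : seq V) (u v : V) : int :=
  let w0 := head u w in
  let cl := rcons w w0 in
  let x := fun j => nth w0 cl j in
  ((\sum_(j < size w | odd j) edge_is (x j) (x j.-1) u v)%N)%:Z
  - ((\sum_(j < size w | odd j) edge_is (x j) (x j.+1) u v)%N)%:Z.

(* G_Delta (weights c_G(uv) + n_w(uv) Delta; read as nat via absz, which is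
   exact whenever these weights are nonnegative, i.e. for admissible Delta) *)
Definition GDz (G : V -> V -> nat) (w : seq V) (D : int) (u v : V) : int :=
  (G u v)%:Z + nw w u v * D.
Definition GD (G : V -> V -> nat) (w : seq V) (D : int) : V -> V -> nat :=
  fun u v => absz (GDz G w D u v).

Definition admissible (G : V -> V -> nat) (w : seq V) (D : int) : bool :=
  [forall u, forall v, 0 <= GDz G w D u v] && inG (GD G w D).

Definition sprob (G : V -> V -> nat) (w : seq V) (low up : int) (D : int) : rat :=
  if (low <= D) && (D <= up) then
    Vz (GD G w D) w / (\sum_(i < (absz (up - low)).+1) Vz (GD G w (low + i%:Z)) w)
  else 0.

End WGS.

(* Main.v *)
Require Import Defs.
From HB Require Import structures.
From mathcomp Require Import all_boot all_order all_algebra.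
From mathcomp Require Import zify ring.
From Stdlib Require Import FunctionalExtensionality.
Import Order.TTheory GRing.Theory Num.Theory.
Local Open Scope ring_scope.

Lemma kstep_eqN (V : finType) (F : rel V) (G1 G2 : V -> V -> nat)
  (H : forall u, Nb F G1 u = Nb F G2 u) w0 n :
  forall prev cur rest, (size rest <= n)%N ->
  kstep F G1 w0 prev cur rest = kstep F G2 w0 prev cur rest.
Proof.
elim: n => [|n IH] prev cur [|x [|y r]] //= Hs.
- by rewrite H.
- have E1 := H cur; have E2 := IH (Some x) y r; rewrite E1 E2 //; move: Hs => /=; lia.
Qed.

Lemma kprob_eq (V : finType) (F : rel V) (G1 G2 : V -> V -> nat)
  (H : forall u, Nb F G1 u = Nb F G2 u) w :
  kprob F G1 w = kprob F G2 w.
Proof.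
have Hs : starts F G1 = starts F G2.
  by apply/setP=> v; rewrite !inE H.
case: w => [|w0 r] //=; rewrite Hs (@kstep_eqN V F G1 G2 H w0 (size r) None w0 r (leqnn _)) //.
Qed.

Lemma intpos (G n low up D : int) : 0 <= G + n * low -> 0 <= G + n * up ->
  low < D -> D < up -> n != 0 -> 0 < G + n * D.
Proof. move=> *; nia. Qed.

Theorem mainTheorem8 (V : finType) (directed : bool) (G0 : V -> V -> nat) (F : rel V)
  (Hund : ~~ directed ->
     (forall u v, G0 u v = G0 v u) /\ (forall u v, F u v = F v u))
  (G : V -> V -> nat) (HG : inG directed G0 F G)
  (w : seq V) (Hw : 0 < kprob F G w)
  (low up : int)
  (Hrange : forall D : int, admissible directed G0 F G w D <-> (low <= D <= up)) :
  (2%:Z <= up - low ->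
     forall D1 D2 : int, low < D1 < up -> low < D2 < up ->
       Vz F (GD directed G w D1) w = Vz F (GD directed G w D2) w)
  /\
  (forall alpha : rat,
     (forall Ds : int, low < Ds < up -> Vz F (GD directed G w Ds) w = alpha) ->
     forall Dt : int,
       let Vlow := Vz F (GD directed G w low) w in
       let Vup := Vz F (GD directed G w up) w in
       let d := Vlow + Vup + alpha * (Num.max (up - low - 1) 0)%:~R in
       sprob directed F G w low up Dt =
         d^-1 * (Vlow * ind (Dt == low) + Vup * ind (Dt == up)
                 + alpha * ind (low < Dt < up))).
Proof.
have H0 : admissible directed G0 F G w 0.
  have -> : admissible directed G0 F G w 0 =
      [forall u, forall v, 0 <= GDz directed G w 0 u v] && inG directed G0 F G.
    rewrite /admissible; congr (_ && _); congr (inG _ _ _).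
    apply: functional_extensionality => u; apply: functional_extensionality => v.
    by rewrite /GD /GDz mulr0 addr0.
  rewrite HG andbT; apply/forallP=> u; apply/forallP=> v.
  by rewrite /GDz mulr0 addr0.
have /Hrange /andP[Hl0 H0u] := H0.
have Hlu : low <= up by apply: le_trans Hl0 H0u.
have Hnn : forall D, low <= D <= up -> forall u v, 0 <= GDz directed G w D u v.
  move=> D /Hrange /andP[/forallP Hf _] u v; exact: (forallP (Hf u)).
split.
  move=> _ D1 D2 /andP[H11 H12] /andP[H21 H22].
  have HN : forall u, Nb F (GD directed G w D1) u = Nb F (GD directed G w D2) u.
    move=> u; apply/setP=> v; rewrite !inE /GD; congr (_ && _).
    have Hl := Hnn low; have Hu := Hnn up.
    rewrite lexx Hlu /= in Hl; rewrite lexx Hlu /= in Hu.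
    have Hl' := Hl erefl v u; have Hu' := Hu erefl v u.
    move: Hl' Hu'; rewrite /GDz.
    case: (eqVneq (nw directed w v u) 0) => [->|Hn] Hl' Hu'.
      by rewrite !mul0r.
    rewrite !absz_gt0 !gt_eqF //; exact: intpos Hl' Hu' _ _ Hn.
  by rewrite /Vz !(@kprob_eq V F _ _ HN).
move=> alpha Ha Dt.
have [n Hn] : exists n : nat, up = low + n%:Z.
  exists (absz (up - low)); rewrite abszE ger0_norm ?subr_ge0 //.
  by rewrite [low + _]addrC subrK.
subst up => Vlow Vup d; rewrite {}/d {}/Vup {}/Vlow.
rewrite /sprob.
have -> : low + n%:Z - low = n%:Z by rewrite addrC addKr.
set f := fun D => Vz F (GD directed G w D) w.
rewrite -/(f Dt) -/(f low) -/(f (low + n%:Z)).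
case: n Ha Hlu Hrange Hnn H0u => [|m] Ha Hlu Hrange Hnn H0u.
  rewrite addr0 big_ord1 addr0 /= -/(f low).
  have -> : Num.max (0%Z - 1) 0 = 0 :> int by [].
  rewrite mulr0 addr0.
  case: (eqVneq Dt low) => [->|Hne].
    rewrite lexx /= ltxx /= /ind /= mulr0 addr0 !mulr1.
    case: (eqVneq (f low) 0) => [->|Hf]; first by rewrite !mul0r invr0 mul0r.
    have Hf2 : f low + f low != 0 by rewrite -mulr2n mulrn_eq0 negb_or Hf.
    by rewrite divff // mulVf.
  have -> : (low <= Dt <= low) = false.
    by apply/negbTE; apply/negP => /andP[a b]; move/eqP: Hne; apply; apply/eqP; rewrite eq_le a b.
  have -> : (low < Dt < low) = false by case: ltgtP.
  by rewrite /ind /= !mulr0.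
have Hsum : \sum_(i < m.+2) Vz F (GD directed G w (low + i%:Z)) w =
    f low + f (low + m.+1%:Z) + alpha *+ m.
  rewrite big_ord_recr big_ord_recl /=.
  have E : low + (0%N)%:Z = low by lia.
  rewrite E -/(f low) -/(f (low + m.+1%:Z)).
  rewrite (eq_bigr (fun _ => alpha)); first by rewrite sumr_const card_ord; ring.
  move=> i _; apply: Ha; rewrite /bump /=.
  have := ltn_ord i; move=> hi; apply/andP; split; lia.
have Hmax : Num.max ((m.+1)%:Z - 1) 0 = m%:Z.
  by rewrite max_l; lia.
rewrite Hsum Hmax -mulr_natr.
have key : (if low <= Dt <= low + m.+1%:Z then f Dt else 0) =
  f low * ind (Dt == low) + f (low + m.+1%:Z) * ind (Dt == low + m.+1%:Z)
  + alpha * ind (low < Dt < low + m.+1%:Z).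
  case: (eqVneq Dt low) => [->|h1].
    have -> : (low == low + m.+1%:Z) = false by apply/eqP; lia.
    have -> : (low <= low <= low + m.+1%:Z) by apply/andP; split; lia.
    have -> : (low < low < low + m.+1%:Z) = false by apply/negbTE/negP => /andP[]; lia.
    by rewrite /ind mulr1 !mulr0 !addr0.
  case: (eqVneq Dt (low + m.+1%:Z)) => [->|h2].
    have -> : (low <= low + m.+1%:Z <= low + m.+1%:Z) by apply/andP; split; lia.
    have -> : (low < low + m.+1%:Z < low + m.+1%:Z) = false by apply/negbTE/negP => /andP[]; lia.
    by rewrite /ind mulr1 !mulr0 add0r addr0.
  have -> : (low < Dt < low + m.+1%:Z) = (low <= Dt <= low + m.+1%:Z).
    apply/idP/idP => /andP[a b]; apply/andP; split; lia.
  case: ifP => Hc; rewrite /ind /= !mulr0 !add0r ?mulr1 ?mulr0 //.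
  move/eqP: h1 => h1; move/eqP: h2 => h2.
  apply: Ha; case/andP: Hc => a b; apply/andP; split; lia.
case: ifP => Hc; move: key; rewrite Hc => key; rewrite -key; last by rewrite mulr0.
by rewrite mulrC.
Qed.
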